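(* In the upper half-plane model of $\mathbb{H}^2$, let $B_i=B(c_i,r_i)$, $i\in\mathbb{N}$, be pairwise disjoint closed Euclidean disks with centers $c_i\in\mathbb{Z}\subset\mathbb{R}$ and radii $r_i\le1$, with $|c_i-c_j|>1$ for $i\ne j$, let $h_i$ be the inversion in $\partial B_i$, and $C_i=\partial B_i\cap\mathbb{H}^2$. Fix $k\in\mathbb{N}_0$; for $n\ge1$ let $I_{k,n}$ be the set of multi-indices $\underline{i}=(i_1,\dots,i_n)$ with all $i_m>k$ and $i_m\ne i_{m+1}$, and let $r_{\underline{i}}$ be the Euclidean radius of the semicircle $h_{i_1}\circ\cdots\circ h_{i_{n-1}}(C_{i_n})$. Let $\alpha>0$. If $$\sum_{i\ne j,\ i>k,\ j>k}\left(\frac{1}{|c_i-c_j|-1}\right)^{2\alpha}\le1,$$ then for every $n\ge2$, $$\sum_{\underline{i}\in I_{k,n}}r_{\underline{i}}^{\alpha}\le\sum_{\underline{j}\in I_{k,n-1}}r_{\underline{j}}^{\alpha}.$$ *)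

(* Defs.v *)
From HB Require Import structures.
From mathcomp Require Import all_boot all_order all_algebra.
From mathcomp Require Import all_classical all_reals all_analysis.
Set Implicit Arguments. Unset Strict Implicit. Unset Printing Implicit Defensive.
Import Order.TTheory GRing.Theory Num.Theory.
Local Open Scope classical_set_scope.
Local Open Scope ring_scope.

Section Defs.
Variable R : realType.

Definition H2 : set (R * R) := [set p | 0 < p.2].

Definition cdisk (c r : R) : set (R * R) :=
  [set p | (p.1 - c) ^+ 2 + p.2 ^+ 2 <= r ^+ 2].

Definition semicircle (c r : R) : set (R * R) :=
  [set p | (p.1 - c) ^+ 2 + p.2 ^+ 2 = r ^+ 2 /\ 0 < p.2].

Definition inversion (c r : R) (p : R * R) : R * R :=
  let d := (p.1 - c) ^+ 2 + p.2 ^+ 2 in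
  (c + r ^+ 2 * (p.1 - c) / d, r ^+ 2 * p.2 / d).

(* Euclidean radius of a set which is a semicircle (a positive r such that
   A = semicircle c r for some real c; this r is unique) *)
Definition eucl_radius (A : set (R * R)) : R :=
  xget 0 [set r : R | 0 < r /\ exists c : R, A = semicircle c r].

Definition multi_idx (k n : nat) : set (seq nat) :=
  [set s | size s = n /\ all (fun i => k < i)%N s /\
           (forall m : nat, (m.+1 < n)%N -> nth 0%N s m <> nth 0%N s m.+1)].

(* h_{i_1} o ... o h_{i_{n-1}} (C_{i_n}) for s = (i_1,...,i_n) *)
Definition img_semicircle (c : nat -> int) (r : nat -> R) (s : seq nat)
  : set (R * R) :=
  (foldr (fun i g => inversion (c i)%:~R (r i) \o g) id (take (size s).-1 s))
    @` semicircle (c (last 0%N s))%:~R (r (last 0%N s)).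

Definition r_multi (c : nat -> int) (r : nat -> R) (s : seq nat) : R :=
  eucl_radius (img_semicircle c r s).

End Defs.

(* Main.v *)
Require Import Defs.
From HB Require Import structures.
From mathcomp Require Import all_boot all_order all_algebra.
From mathcomp Require Import all_classical all_reals all_analysis.
From mathcomp Require Import ring lra.
Import Order.TTheory GRing.Theory Num.Theory.
Local Open Scope classical_set_scope.
Local Open Scope ring_scope.

Section G.
Variable R : realType.

Lemma inv_sub (c R0 x rho : R) : 0 < R0 -> (x - c)^+2 - rho^+2 != 0 ->
  inversion c R0 @` semicircle x rho `<=`
  semicircle (c + R0^+2 * (x - c) / ((x-c)^+2 - rho^+2))
             (R0^+2 * rho / ((x-c)^+2 - rho^+2)).
Proof.
move=> R0p En q [p [hp p2] <-]; rewrite /inversion /semicircle /=.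
move: hp p2 En; case: p => p1 y /= hp yp.
set u := x - c => En.
set P1 := p1 - c.
have hp' : y^+2 = rho^+2 - (P1 - u)^+2.
  rewrite -hp /P1 /u; ring.
have dp : 0 < P1^+2 + y^+2 by rewrite ltr_wpDl ?sqr_ge0 ?exprn_gt0.
split; last by rewrite divr_gt0 ?mulr_gt0 ?exprn_gt0.
have dn : P1 ^+ 2 + (rho ^+ 2 - (P1 - u) ^+ 2) != 0 by rewrite -hp' gt_eqF.
rewrite [(R0 ^+ 2 * y / _) ^+ 2]expr_div_n exprMn hp'.
by field; rewrite dn En.
Qed.

Lemma inv_inv (c R0 : R) q : 0 < R0 -> 0 < q.2 ->
  inversion c R0 (inversion c R0 q) = q.
Proof.
case: q => q1 y /= R0p yp; rewrite /inversion /=.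
have dp : 0 < (q1 - c)^+2 + y^+2 by rewrite ltr_wpDl ?sqr_ge0 ?exprn_gt0.
have dn := gt_eqF dp.
have R0n : R0 != 0 by rewrite gt_eqF.
set d := (q1 - c)^+2 + y^+2.
have e1 : c + R0 ^+ 2 * (q1 - c) / d - c = R0 ^+ 2 * (q1 - c) / d by ring.
rewrite e1.
have e2 : (R0 ^+ 2 * (q1 - c) / d) ^+ 2 + (R0 ^+ 2 * y / d) ^+ 2 = R0 ^+ 4 / d.
  by rewrite /d; field; rewrite -/d dn.
rewrite e2.
congr pair; field; rewrite ?dn ?R0n ?expf_neq0 //.
Qed.

Lemma inv_img (c R0 x rho : R) : 0 < R0 -> 0 < rho -> rho^+2 < (x - c)^+2 ->
  inversion c R0 @` semicircle x rho =
  semicircle (c + R0^+2 * (x - c) / ((x-c)^+2 - rho^+2))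
             (R0^+2 * rho / ((x-c)^+2 - rho^+2)).
Proof.
move=> R0p rp hE.
have En : (x - c)^+2 - rho^+2 != 0 by rewrite gt_eqF // subr_gt0.
have R0n : R0 != 0 by rewrite gt_eqF.
apply/seteqP; split; first exact: inv_sub.
set x' := c + _; set r' := R0^+2 * rho / _.
have hE' : (x' - c)^+2 - r'^+2 = R0^+4 / ((x-c)^+2 - rho^+2).
  rewrite /x' /r'; field; exact: En.
have E'n : (x' - c)^+2 - r'^+2 != 0.
  by rewrite hE' mulf_neq0 ?invr_eq0 ?expf_neq0.
move=> q hq.
have := @inv_sub c R0 x' r' R0p E'n.
rewrite hE'.
have -> : c + R0 ^+ 2 * (x' - c) / (R0 ^+ 4 / ((x - c) ^+ 2 - rho ^+ 2)) = x.
  rewrite /x'; field; rewrite En R0n //.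
have -> : R0 ^+ 2 * r' / (R0 ^+ 4 / ((x - c) ^+ 2 - rho ^+ 2)) = rho.
  rewrite /r'; field; rewrite En R0n //.
move=> /(_ (inversion c R0 q) (ex_intro2 _ _ q hq erefl)) hq'.
exists (inversion c R0 q) => //.
apply: inv_inv => //; by case: hq.
Qed.

Lemma semicircle_rad (a b r s : R) : 0 < r -> 0 < s ->
  semicircle a r = semicircle b s -> r = s.
Proof.
move=> rp sp e.
have h1 : semicircle b s (a, r) by rewrite -e; split => //=; rewrite subrr; ring.
have h2 : semicircle a r (b, s) by rewrite e; split => //=; rewrite subrr; ring.
case: h1 => /= h1 _; case: h2 => /= h2 _.
have h3 : (b - a)^+2 = (a - b)^+2 by ring.
nra.
Qed.

Lemma eucl_radius_semi (x rho : R) : 0 < rho ->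
  eucl_radius (semicircle x rho) = rho.
Proof.
move=> rp; apply: xget_unique; first by split => //; exists x.
move=> y [yp [c' e]]; symmetry; exact: (@semicircle_rad x c' rho y rp yp e).
Qed.


Lemma inv_step (ci cj ri rj x rho : R) : 0 < ri -> 0 < rho -> ri + rj < `|ci - cj| ->
  1 < `|ci - cj| -> `|x - cj| + rho <= rj -> rj <= 1 -> ri <= 1 ->
  rho^+2 < (x-ci)^+2 /\ 0 < ri^+2 * rho / ((x-ci)^+2 - rho^+2) /\
  `|ci + ri^+2 * (x-ci) / ((x-ci)^+2 - rho^+2) - ci| + ri^+2 * rho / ((x-ci)^+2 - rho^+2) <= ri /\
  ri^+2 * rho / ((x-ci)^+2 - rho^+2) <= rho / (`|ci - cj| - 1)^+2.
Proof.
move=> rip rhop hd hd1 hx rj1 ri1.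
set a := `|x - ci|.
have ha : `|ci - cj| <= a + `|x - cj|.
  have -> : ci - cj = (ci - x) + (x - cj) by ring.
  by rewrite (le_trans (ler_normD _ _)) // distrC.
have a0 : 0 <= a by exact: normr_ge0.
have ha2 : (x - ci)^+2 = a^+2 by rewrite /a real_normK ?num_real.
have hE : (x-ci)^+2 - rho^+2 = (a - rho) * (a + rho) by rewrite ha2; ring.
have amr : ri <= a - rho by lra.
have amr1 : `|ci - cj| - 1 <= a - rho by lra.
have Ep : 0 < (a - rho) * (a + rho) by apply: mulr_gt0; lra.
rewrite hE; split; first by rewrite ha2; nra.
split; first by apply: divr_gt0 => //; apply: mulr_gt0 => //; exact: exprn_gt0.
split.
  have -> : ci + ri ^+ 2 * (x - ci) / ((a - rho) * (a + rho)) - ci =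
            ri ^+ 2 / ((a - rho) * (a + rho)) * (x - ci) by ring.
  rewrite normrM -/a ger0_norm; last by rewrite divr_ge0 ?sqr_ge0 ?(ltW Ep).
  have -> : ri ^+ 2 / ((a - rho) * (a + rho)) * a + ri ^+ 2 * rho / ((a - rho) * (a + rho))
     = ri ^+ 2 / (a - rho).
    field; apply/andP; split; rewrite gt_eqF //; lra.
  rewrite ler_pdivrMr; last lra.
  nra.
rewrite ler_pdivrMr // [rho / _ * _]mulrAC ler_pdivlMr; last by rewrite exprn_gt0 //; lra.
have h1 : (`|ci - cj| - 1)^+2 <= (a - rho) * (a + rho) by nra.
have h2 : ri^+2 <= 1 by nra.
have hD : 0 <= (`|ci - cj| - 1)^+2 by exact: sqr_ge0.
have h3 := ler_wpM2r (mulr_ge0 (ltW rhop) hD) h2.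
have h4 := ler_wpM2l (ltW rhop) h1.
rewrite mul1r in h3. rewrite -mulrA. exact: le_trans h3 h4.
Qed.


Lemma disj_sep (a b ri rj : R) : 0 < ri -> 0 < rj ->
  cdisk a ri `&` cdisk b rj = set0 -> ri + rj < `|a - b|.
Proof.
move=> rip rjp e; rewrite ltNge; apply/negP => hle.
set sm := ri + rj.
have smp : 0 < sm by rewrite addr_gt0.
have hab : (b - a)^+2 <= sm^+2.
  have -> : (b - a)^+2 = `|a - b|^+2 by rewrite real_normK ?num_real //; ring.
  by rewrite !expr2 ler_pM...
have : (cdisk a ri `&` cdisk b rj) ((rj * a + ri * b) / sm, 0).
  split; rewrite /cdisk /=.
    have -> : ((rj * a + ri * b) / sm - a) ^+ 2 + 0 ^+ 2 = ri^+2 * ((b - a)^+2 / sm^+2).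
      by rewrite /sm; field; rewrite -/sm gt_eqF.
    rewrite ler_piMr ?sqr_ge0 // ler_pdivrMr ?exprn_gt0 // mul1r //.
  have -> : ((rj * a + ri * b) / sm - b) ^+ 2 + 0 ^+ 2 = rj^+2 * ((b - a)^+2 / sm^+2).
    by rewrite /sm; field; rewrite -/sm gt_eqF.
  rewrite ler_piMr ?sqr_ge0 // ler_pdivrMr ?exprn_gt0 // mul1r //.
by rewrite e.
Qed.

Lemma img_cons (c : nat -> int) (r : nat -> R) i s : s != [::] ->
  img_semicircle c r (i :: s) = inversion (c i)%:~R (r i) @` img_semicircle c r s.
Proof.
case: s => [//|j s] _; rewrite /img_semicircle /=.
by rewrite image_comp.
Qed.

Lemma esum_sub (T : choiceType) (A B : set T) (a : T -> \bar R) :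
  A `<=` B -> (forall x, B x -> (0 <= a x)%E) ->
  (\esum_(i in A) a i <= \esum_(i in B) a i)%E.
Proof.
move=> AB a0; rewrite esum_mkcond [X in (_ <= X)%E]esum_mkcond.
apply: le_esum => x _; case: ifPn => xA.
  by rewrite ifT // inE; apply: AB; rewrite -inE.
by case: ifPn => // /[!inE] /a0.
Qed.

Lemma esum_scal (T : choiceType) (I : set T) (x : R) (a : T -> \bar R) :
  0 <= x -> (forall i, (0 <= a i)%E) ->
  (\esum_(i in I) (x%:E * a i) <= x%:E * \esum_(i in I) a i)%E.
Proof.
move=> x0 a0; apply: ge_ereal_sup => _ [X [finX XI] <-].
rewrite fsbig_finite //= -ge0_sume_distrr //.
apply: lee_wpmul2l; first by rewrite lee_fin.
rewrite -fsbig_finite //; apply: ereal_sup_ubound; exists X => //.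
Qed.

Lemma eucl_radius_ge0 (A : set (R * R)) : 0 <= eucl_radius A.
Proof. by rewrite /eucl_radius; case: xgetP => // x _ [/ltW]. Qed.

Section Main.
Variables (c : nat -> int) (r : nat -> R).
Hypothesis hr0 : forall i : nat, (0 < i)%N -> 0 < r i.
Hypothesis hr1 : forall i : nat, (0 < i)%N -> r i <= 1.
Hypothesis hdisj : forall i j : nat, (0 < i)%N -> (0 < j)%N -> i <> j ->
     cdisk (c i)%:~R (r i) `&` cdisk (c j)%:~R (r j) = set0.
Hypothesis hsep : forall i j : nat, (0 < i)%N -> (0 < j)%N -> i <> j ->
     1 < `|(c i)%:~R - (c j)%:~R : R|.

Definition valid (s : seq nat) := [/\ s != [::], all (fun i => 0 < i)%N s &
  forall m, (m.+1 < size s)%N -> nth 0%N s m <> nth 0%N s m.+1].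

Lemma img_semi s : valid s -> exists x rho, [/\ 0 < rho,
  img_semicircle c r s = semicircle x rho &
  `|x - (c (head 0%N s))%:~R| + rho <= r (head 0%N s)].
Proof.
elim: s => [[]//|i s IH].
case: s IH => [|j s] IH [_ /= /andP[i0 hall] hnth].
  exists (c i)%:~R, (r i); split => //; first exact: hr0.
    by rewrite /img_semicircle /= image_id.
  by rewrite subrr normr0 add0r.
have j0 : (0 < j)%N by case/andP: hall.
have v : valid (j :: s) by split => // m hm; exact: (hnth m.+1 hm).
have [x [rho [rhop e hx]]] := IH v.
have ij : i <> j := hnth 0%N erefl.
have := @inv_step ((c i)%:~R) ((c j)%:~R) (r i) (r j) x rho (hr0 _ i0) rhop
  (disj_sep _ _ _ _ (hr0 _ i0) (hr0 _ j0) (hdisj _ _ i0 j0 ij)) (hsep _ _ i0 j0 ij) hx (hr1 _ j0) (hr1 _ i0).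
case=> h1 [h2 [h3 h4]].
eexists; eexists; split; [exact: h2| |exact: h3].
by rewrite img_cons // e inv_img // hr0.
Qed.

Lemma r_step s i : valid s -> (0 < i)%N -> i <> head 0%N s ->
  0 < r_multi c r s /\
  r_multi c r (i :: s) <= r_multi c r s / (`|(c i)%:~R - (c (head 0%N s))%:~R| - 1)^+2.
Proof.
move=> vs i0 ij.
have [x [rho [rhop e hx]]] := img_semi s vs.
case: (vs) => sn /allP hall _.
have j0 : (0 < head 0%N s)%N by apply: hall; case: (s) sn => //= ? ? _; rewrite inE eqxx.
have := @inv_step ((c i)%:~R) ((c (head 0%N s))%:~R) (r i) (r (head 0%N s)) x rho (hr0 _ i0) rhop
  (disj_sep _ _ _ _ (hr0 _ i0) (hr0 _ j0) (hdisj _ _ i0 j0 ij)) (hsep _ _ i0 j0 ij) hx (hr1 _ j0) (hr1 _ i0).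
case=> h1 [h2 [h3 h4]].
rewrite /r_multi img_cons // e inv_img ?hr0 // !eucl_radius_semi //.
Qed.

Lemma main_ineq (k : nat) (alpha : R) (halpha : 0 < alpha)
  (hsum : (\esum_(ij in [set ij : nat * nat | ij.1 <> ij.2 /\ (k < ij.1)%N /\ (k < ij.2)%N])
            (((`|(c ij.1)%:~R - (c ij.2)%:~R : R| - 1)^-1) `^ (2 * alpha))%:E <= 1)%E)
  (n : nat) : (2 <= n)%N ->
    (\esum_(s in multi_idx k n) ((r_multi c r s) `^ alpha)%:E
       <= \esum_(s in multi_idx k n.-1) ((r_multi c r s) `^ alpha)%:E)%E.
Proof.
move=> hn.
set J := fun t : seq nat => [set i | (k < i)%N /\ i <> head 0%N t].
have hI : multi_idx k n =
    (fun p : seq nat * nat => p.2 :: p.1) @` (multi_idx k n.-1 `*`` J).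
  apply/seteqP; split.
    move=> [|i t] [hs [hall hnth]]; first by move: hn; rewrite -hs.
    exists (t, i) => //; move: hall => /= /andP[ki hall].
    split; last first.
      split => //=; move: (hnth 0%N) => /=; rewrite nth0; apply; exact: hn.
    split; first by rewrite -hs.
    split => // m hm; apply: (hnth m.+1); rewrite -hs /=; move: hm; rewrite -hs /=.
    by [].
  move=> _ [[t i] [[ht [hall hnth]] [ki hi]] <-] /=.
  split; first by rewrite /= ht prednK // (leq_trans _ hn).
  split; first by rewrite /= ki hall.
  case=> [|m] hm /=; first by rewrite nth0.
  apply: hnth; move: hm; by case: (n) hn => [|[|n0]].
rewrite hI esum_image; last by move=> [t i] [t' i'] _ _ /= [-> ->].
have hee := esum_esum (I := multi_idx k n.-1) (J := J)
  (a := fun t i => ((r_multi c r (i :: t)) `^ alpha)%:E)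
  (fun _ _ _ _ => ltac:(by rewrite lee_fin powR_ge0)).
rewrite /= in hee; rewrite -hee; clear hee.
apply: le_esum => t [ht [hall hnth]].
have tn : t != [::] by apply/eqP => t0; move: ht hn; rewrite t0 /=; case: (n) => [|[|]].
have hall0 : all (fun i => 0 < i)%N t.
  by apply/allP => x /(allP hall) /=; apply: leq_ltn_trans.
have vt : valid t by split => // m; rewrite ht; exact: hnth.
set j := head 0%N t.
have kj : (k < j)%N by rewrite /j; case: (t) tn hall => //= x ? _ /andP[].
set W := fun i : nat => ((`|(c i)%:~R - (c j)%:~R : R| - 1)^-1) `^ (2 * alpha).
apply: (@le_trans _ _ (\esum_(i in J t) ((r_multi c r t `^ alpha)%:E * (W i)%:E))%E).
  apply: le_esum => i [ki hij].
  have i0 : (0 < i)%N by apply: leq_ltn_trans ki.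
  have [rp hle] := r_step t i vt i0 hij.
  rewrite -EFinM lee_fin.
  have d1 : 1 < `|(c i)%:~R - (c j)%:~R : R| by apply: hsep => //; apply: leq_ltn_trans kj.
  have z0 : 0 <= (`|(c i)%:~R - (c j)%:~R : R| - 1)^-1 by rewrite invr_ge0 subr_ge0 ltW.
  rewrite /W powRrM powR_mulrn // -powRM ?powR_ge0 ?exprn_ge0 ?(ltW rp) //.
  apply: ge0_ler_powR; rewrite ?nnegrE ?(ltW halpha) ?eucl_radius_ge0 ?mulr_ge0 ?exprn_ge0 ?(ltW rp) //.
  by rewrite exprVn.
have hW : forall i, (0 <= (W i)%:E)%E by move=> i; rewrite lee_fin powR_ge0.
apply: le_trans (esum_scal _ _ _ _ (powR_ge0 _ _) hW) _.
rewrite -[X in (_ <= X)%E]mule1; apply: lee_wpmul2l; first by rewrite lee_fin powR_ge0.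
apply: le_trans hsum.
have := esum_image (J t) (fun i => (i, j)) (fun ij : nat * nat => (((`|(c ij.1)%:~R - (c ij.2)%:~R : R| - 1)^-1) `^ (2 * alpha))%:E).
have inj : set_inj (J t) (fun i => (i, j)) by move=> x y _ _ [].
rewrite /W; move=> /(_ inj) /= <-.
apply: esum_sub; first by move=> _ [i [ki hij] <-] /=.
by move=> x _; rewrite lee_fin powR_ge0.
Qed.


End Main.

End G.

Theorem lemma3p3 (R : realType) (c : nat -> int) (r : nat -> R) (k : nat)
  (alpha : R)
  (hr0 : forall i : nat, (0 < i)%N -> 0 < r i)
  (hr1 : forall i : nat, (0 < i)%N -> r i <= 1)
  (hdisj : forall i j : nat, (0 < i)%N -> (0 < j)%N -> i <> j ->
     cdisk (c i)%:~R (r i) `&` cdisk (c j)%:~R (r j) = set0)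
  (hsep : forall i j : nat, (0 < i)%N -> (0 < j)%N -> i <> j ->
     1 < `|(c i)%:~R - (c j)%:~R : R|)
  (halpha : 0 < alpha)
  (hsum : (\esum_(ij in [set ij : nat * nat | ij.1 <> ij.2 /\ (k < ij.1)%N /\ (k < ij.2)%N])
            (((`|(c ij.1)%:~R - (c ij.2)%:~R : R| - 1)^-1) `^ (2 * alpha))%:E <= 1)%E) :
  forall n : nat, (2 <= n)%N ->
    (\esum_(s in multi_idx k n) ((r_multi c r s) `^ alpha)%:E
       <= \esum_(s in multi_idx k n.-1) ((r_multi c r s) `^ alpha)%:E)%E.
Proof.
move=> n hn.
by have := @main_ineq R c r hr0 hr1 hdisj hsep k alpha halpha hsum n hn.
Qed.
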